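(* In the Simon urn described in the context, with fixed trigger probability $p\in(0,1)$, for all integers $n\ge c\ge1$, $$\mathbb E[K_{n,c}]=\frac{\Gamma(n-p+1)}{\Gamma(n)}\left(\frac{p^{c-1}}{(1-p)^c}\sum_{i=c+1}^{n}\binom{i-2}{c-2}\frac{(1-p)^i\,\Gamma(i)}{\Gamma(i-p+1)}+\frac{p^{c-1}\,\Gamma(c)}{\Gamma(c-p+1)}\right),$$ where $\Gamma$ is the gamma function, an empty sum is $0$, and $\binom{i-2}{-1}=0$.
   Context: Simon urn. The urn is empty at time $0$. Let $B_0=1$ and let $(B_n)_{n\ge1}$ be i.i.d. Bernoulli random variables with $\Pr(B_n=1)=p\in(0,1)$, independent of everything else. Colors are labelled $1,2,\dots$ in order of first appearance. At each time $n\ge1$: if $B_{n-1}=1$, one ball of a new color (not yet present) is added to the urn and this color is registered; if $B_{n-1}=0$, a ball is drawn uniformly at random from the urn, its color is registered, and one additional ball of that color is added. Thus the urn contains $n$ balls at time $n$. $K_{n,c}$ denotes the number of times color $c$ has been registered up to and including time $n$ (equal to the number of balls of color $c$ at time $n$), and $K_{n,c}=0$ if color $c$ has not yet appeared. *)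

(* Defs.v *)
From HB Require Import structures.
From mathcomp Require Import all_boot all_order all_algebra.
From mathcomp Require Import all_classical all_reals all_analysis.
Set Implicit Arguments. Unset Strict Implicit. Unset Printing Implicit Defensive.
Import Order.TTheory GRing.Theory Num.Theory.
Local Open Scope classical_set_scope.
Local Open Scope ring_scope.

(* Euler's Gamma function, Gamma x = int_0^oo t^(x-1) e^(-t) dt (used only for x > 0). *)
Definition Gamma {R : realType} (x : R) : R :=
  Rintegral (@lebesgue_measure R) `]0%R, +oo[
            (fun t : R => t `^ (x - 1) * expR (- t)).

(* The state of the urn at time n is the sequence of the colors of its n balls,
   in order of addition (ball k+1 was added at time k+1).  Colors are 1,2,...
   in order of first appearance, so the next new color is (max color) + 1. *)
Definition new_color (s : seq nat) : nat := (foldr maxn 0%N s).+1.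

(* Transition from time n-1 (state s, with n-1 balls) to time n, as a finite
   list of (probability, next state).  At time 1, B_0 = 1 so a new color is
   added.  At time n >= 2, with probability p (B_{n-1} = 1) a new color is
   added; with probability 1-p a ball is drawn uniformly among the n-1 balls
   (each with probability (1-p)/(n-1)) and a ball of its color is added. *)
Definition simon_step {R : realType} (p : R) (n : nat) (s : seq nat)
  : seq (R * seq nat) :=
  if n == 1%N then [:: (1, rcons s (new_color s))]
  else (p, rcons s (new_color s)) ::
       [seq ((1 - p) / (n.-1)%:R, rcons s (nth 0%N s k)) | k <- iota 0 n.-1].

(* Law of the urn state at time n, as a finite list of weighted outcomes. *)
Fixpoint simon_law {R : realType} (p : R) (n : nat) : seq (R * seq nat) :=
  match n with
  | 0 => [:: (1, [::])]
  | m.+1 => flatten [seq [seq (ws.1 * wt.1, wt.2) | wt <- simon_step p m.+1 ws.2]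
                    | ws <- simon_law p m]
  end.

Definition K (n c : nat) (s : seq nat) : nat := count_mem c s.

Definition EK {R : realType} (p : R) (n c : nat) : R :=
  \sum_(ws <- simon_law p n) ws.1 * (K n c ws.2)%:R.

(* Main.v *)
Require Import Defs.
From HB Require Import structures.
From mathcomp Require Import all_boot all_order all_algebra.
From mathcomp Require Import all_classical all_reals all_analysis.
From mathcomp Require Import ring lra zify measurable_realfun.
Import Order.TTheory GRing.Theory Num.Theory.
Local Open Scope ring_scope.

Module SimonAux.
Local Open Scope ring_scope.

Definition Mx (s : seq nat) := foldr maxn 0%N s.

Lemma Mx_rcons s y : Mx (rcons s y) = maxn (Mx s) y.
Proof.
rewrite /Mx; elim: s => [|x s IH] /=; first by rewrite maxn0 max0n.
by rewrite IH maxnA.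
Qed.

Lemma mem_leMx x s : x \in s -> (x <= Mx s)%N.
Proof.
rewrite /Mx; elim: s => //= y s IH; rewrite in_cons => /predU1P[->|/IH h].
  exact: leq_maxl.
exact: leq_trans h (leq_maxr _ _).
Qed.

Lemma nth_leMx s k : (nth 0%N s k <= Mx s)%N.
Proof.
case: (ltnP k (size s)) => h; first exact/mem_leMx/mem_nth.
by rewrite nth_default.
Qed.

Section Disc.
Variable R : realType.
Variable p : R.

Lemma law_inv n ws : ws \in simon_law p n -> size ws.2 = n /\ (Mx ws.2 <= n)%N.
Proof.
elim: n ws => [|n IH] ws /=; first by rewrite inE => /eqP -> .
move/flattenP => [l /mapP [ws' H' ->]] /mapP [wt Hwt ->] /=.
have [hs hm] := IH _ H'.
move: Hwt; rewrite /simon_step; case: ifP => _.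
  rewrite inE => /eqP -> /=; rewrite size_rcons Mx_rcons hs /new_color -/(Mx _).
  by split => //; rewrite (maxn_idPr (leqnSn _)).
rewrite inE => /predU1P [-> | /mapP [k _ ->]] /=; rewrite size_rcons hs Mx_rcons; split => //.
  by rewrite /new_color -/(Mx _) (maxn_idPr (leqnSn _)).
by rewrite (maxn_idPl (nth_leMx _ _)); apply: leq_trans hm _.
Qed.

Lemma sum_lawS n (f : seq nat -> R) :
  \sum_(ws <- simon_law p n.+1) ws.1 * f ws.2 =
  \sum_(ws <- simon_law p n) ws.1 * \sum_(wt <- simon_step p n.+1 ws.2) wt.1 * f wt.2.
Proof.
rewrite /= big_flatten /= big_map; apply: eq_bigr => ws _.
rewrite big_map big_distrr /=; apply: eq_bigr => wt _; by rewrite mulrA.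
Qed.

Lemma step_sum n s (f : seq nat -> R) : (0 < n)%N ->
  \sum_(wt <- simon_step p n.+1 s) wt.1 * f wt.2 =
  p * f (rcons s (new_color s)) +
  (1 - p) / n%:R * \sum_(k <- iota 0 n) f (rcons s (nth 0%N s k)).
Proof.
move=> n0; rewrite /simon_step; have -> : (n.+1 == 1)%N = false by case: n n0.
by rewrite big_cons big_map big_distrr.
Qed.

Lemma sum_iota_const n (x : R) : \sum_(k <- iota 0 n) x = n%:R * x.
Proof.
have -> : \sum_(k <- iota 0 n) x = \sum_(0 <= k < n) x by rewrite /index_iota subn0.
by rewrite sumr_const_nat subn0 mulr_natl.
Qed.

Lemma count_sum (c : nat) s : (count_mem c s)%:R = \sum_(x <- s) (x == c)%:R :> R.
Proof.
elim: s => [|y s IH]; first by rewrite big_nil.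
by rewrite big_cons /= natrD IH.
Qed.

Lemma count_nth_sum (c : nat) s : (count_mem c s)%:R =
  \sum_(k <- iota 0 (size s)) (nth 0%N s k == c)%:R :> R.
Proof.
by rewrite count_sum (big_nth 0%N) /index_iota subn0.
Qed.

Definition PM n (j : nat) := \sum_(ws <- simon_law p n :> seq (R * seq nat)) ws.1 * (Mx ws.2 == j)%:R.

Lemma law1 : simon_law p 1 = [:: (1 * 1, [:: 1%N])].
Proof. by []. Qed.

Lemma PM1 j : PM 1 j = (1%N == j)%:R.
Proof. by rewrite /PM law1 big_cons big_nil /= !mul1r addr0. Qed.

Lemma PMS n j : (0 < n)%N ->
  PM n.+1 j = p * \sum_(ws <- simon_law p n) ws.1 * ((Mx ws.2).+1 == j)%:R
              + (1 - p) * PM n j.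
Proof.
move=> n0; rewrite /PM (sum_lawS n (fun s => (Mx s == j)%:R)) big_distrr [X in _ = _ + X]big_distrr -big_split /=.
apply: eq_big_seq => ws /law_inv [hs _].
rewrite (step_sum _ _ (fun s => (Mx s == j)%:R)) // /= Mx_rcons /new_color -/(Mx _) (maxn_idPr (leqnSn _)).
under eq_bigr do rewrite Mx_rcons (maxn_idPl (nth_leMx _ _)).
rewrite sum_iota_const; field; by rewrite pnatr_eq0 -lt0n.
Qed.

Lemma PM0 n : (0 < n)%N -> PM n 0 = 0.
Proof.
case: n => // n _; elim: n => [|n IH]; first by rewrite PM1.
rewrite PMS // IH mulr0 addr0.
by rewrite big1 ?mulr0 // => ws _; rewrite mulr0.
Qed.

Lemma PMSS n j : (0 < n)%N -> PM n.+1 j.+1 = p * PM n j + (1 - p) * PM n j.+1.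
Proof. by move=> n0; rewrite PMS. Qed.

Lemma PM_closed m j : PM m.+1 j.+1 = ('C(m, j))%:R * p ^+ j * (1 - p) ^+ (m - j).
Proof.
elim: m j => [|m IH] j.
  by rewrite PM1 /=; case: j => [|j] /=; rewrite ?bin0 ?expr0 ?mulr1 // bin0n mul0r.
rewrite PMSS // IH; case: j => [|i].
  by rewrite PM0 // !bin0 !subn0 exprS; ring.
rewrite IH binS natrD.
have E : (1 - p) * (('C(m, i.+1))%:R * (1 - p) ^+ (m - i.+1)) =
         ('C(m, i.+1))%:R * (1 - p) ^+ (m - i).
  case: (ltnP i m) => h.
    by rewrite (_ : (m - i) = (m - i.+1).+1)%N ?exprS; [ring | rewrite subnSK].
  by rewrite bin_small ?ltnS // mul0r mulr0 mul0r.
rewrite subSS (_ : (1 - p) * (('C(m, i.+1))%:R * p ^+ i.+1 * (1 - p) ^+ (m - i.+1)) =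
  p ^+ i.+1 * ((1 - p) * (('C(m, i.+1))%:R * (1 - p) ^+ (m - i.+1)))); last ring.
rewrite E exprS; ring.
Qed.


Lemma EK_S n c : (0 < n)%N -> EK p n.+1 c = (1 + (1 - p) / n%:R) * EK p n c +
   p * \sum_(ws <- simon_law p n) ws.1 * ((Mx ws.2).+1 == c)%:R.
Proof.
move=> n0; rewrite /EK /K (sum_lawS n (fun s => (count_mem c s)%:R)) big_distrr.
rewrite [X in _ = _ + X]big_distrr -big_split /=.
apply: eq_big_seq => ws /law_inv [hs _].
rewrite (step_sum _ _ (fun s => (count_mem c s)%:R)) //=.
under eq_bigr do rewrite -cats1 count_cat /= addn0 natrD.
rewrite -cats1 count_cat /= addn0 natrD big_split /= sum_iota_const.
rewrite (_ : \sum_(k <- iota 0 n) (nth 0%N ws.2 k == c)%:R = (count_mem c ws.2)%:R);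
  last by rewrite count_nth_sum hs.
rewrite /new_color -/(Mx _).
field; by rewrite pnatr_eq0 -lt0n.
Qed.

Lemma EK1 c : EK p 1 c = (1%N == c)%:R.
Proof. by rewrite /EK /K law1 big_cons big_nil /= addn0 !mul1r addr0. Qed.

Lemma EK_small n c : (n < c)%N -> EK p n c = 0.
Proof.
move=> nc; rewrite /EK big1_seq // => ws /andP[_ /law_inv [_ hm]].
rewrite /K (count_memPn _) ?mulr0 //; apply/negP => /mem_leMx h.
by move: (leq_trans h hm); rewrite leqNgt nc.
Qed.

End Disc.
Arguments PM {R}.

Section Alg.
Variable R : realType.
Variable p : R.
Hypothesis hp0 : 0 < p.
Hypothesis hp1 : p < 1.

Lemma EK_diag c : (1 <= c)%N -> EK p c c = p ^+ c.-1.
Proof.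
case: c => // [[|c]] _; first by rewrite EK1.
rewrite EK_S // EK_small // mulr0 add0r.
rewrite (_ : \sum_(ws <- simon_law p c.+1) ws.1 * ((Mx ws.2).+1 == c.+2)%:R = PM p c.+1 c.+1);
  last by apply: eq_bigr => ws _; rewrite eqSS.
by rewrite PM_closed binn subnn expr0 mulr1 mul1r /= exprS.
Qed.

Definition Wt (c i : nat) : R := if c == 1%N then 0 else ('C(i - 2, c - 2))%:R.

Lemma src n c : (1 <= c)%N -> (c <= n)%N ->
  p * \sum_(ws <- simon_law p n) ws.1 * ((Mx ws.2).+1 == c)%:R =
  p ^+ c.-1 / (1 - p) ^+ c * Wt c n.+1 * (1 - p) ^+ n.+1.
Proof.
have p1 : 1 - p != 0 by rewrite subr_eq0 eq_sym lt_eqF.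
case: c => // [[|c]] _ hcn.
  rewrite /Wt /= mulr0 mul0r.
  rewrite (_ : \sum_(ws <- simon_law p n) ws.1 * ((Mx ws.2).+1 == 1%N)%:R = PM p n 0);
    last by apply: eq_bigr => ws _; rewrite eqSS.
  by rewrite PM0 ?mulr0 //; apply: leq_trans hcn.
rewrite (_ : \sum_(ws <- simon_law p n) ws.1 * ((Mx ws.2).+1 == c.+2)%:R = PM p n c.+1);
  last by apply: eq_bigr => ws _; rewrite eqSS.
case: n hcn => // m hcn.
rewrite PM_closed /Wt /= subn2 /=.
have -> : (m.+2 = c.+2 + (m - c))%N by rewrite addSn addSn subnKC // -ltnS ltnW.
rewrite exprD.
have -> : (m - c = (m - c.+1).+1)%N by rewrite subnSK.
rewrite !subSS subn0 [p ^+ c.+1]exprS.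
have aux (a b c' d e : R) : e != 0 -> a * (b * c' * d) = (a * c') / e * b * (e * d).
  by move=> he; field.
by apply: aux; exact: expf_neq0.
Qed.

Lemma main_alg n c (G1 G2 : nat -> R)
  (G1S : forall k, (0 < k)%N -> G1 k.+1 = k%:R * G1 k)
  (G2S : forall k, (0 < k)%N -> G2 k.+1 = (k.+1%:R - p) * G2 k)
  (G1n0 : forall k, (0 < k)%N -> G1 k != 0)
  (G2n0 : forall k, (0 < k)%N -> G2 k != 0) :
  (1 <= c)%N -> (c <= n)%N ->
  EK p n c = G2 n / G1 n *
  (p ^+ c.-1 / (1 - p) ^+ c *
     \sum_(c.+1 <= i < n.+1)
        (if c == 1%N then 0 else ('C(i - 2, c - 2))%:R) *
        ((1 - p) ^+ i * G1 i / G2 i)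
   + p ^+ c.-1 * G1 c / G2 c).
Proof.
move=> hc hcn.
have p1 : 1 - p != 0 by rewrite subr_eq0 eq_sym lt_eqF.
rewrite -(subnKC hcn); elim: (n - c)%N => [|d IH].
  rewrite addn0 big_geq // mulr0 add0r EK_diag //.
  by field; rewrite G1n0 ?G2n0.
have N0 : (0 < c + d)%N by apply: leq_trans hc (leq_addr _ _).
rewrite addnS EK_S // IH src //; last exact: leq_addr.
rewrite [in RHS]big_nat_recr /=; last by lia.
rewrite G1S // G2S //.
rewrite /Wt -natr1.
have hN : (c + d)%:R != 0 :> R by rewrite pnatr_eq0 -lt0n.
have hN2 : (c + d)%:R + 1 - p != 0.
  by rewrite -addrA gt_eqF // ltr_wpDl // subr_gt0.
set S := \sum_(_ <= _ < _) _.
set W := (if _ then _ else _).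
field.
by rewrite -natrD hN2 hN G1n0 // !G2n0 // expf_neq0.
Qed.

End Alg.

Module GammaPart.
Import numFieldNormedType.Exports.
Local Open Scope classical_set_scope.
Local Open Scope ring_scope.

Section Gam.
Variable R : realType.
Notation mu := (@lebesgue_measure R).

Definition gf (x t : R) := t `^ (x - 1) * expR (- t).
Definition EG x := (\int[mu]_(t in `[0%R, +oo[) (gf x t)%:E)%E.

Lemma mgf x (D : set R) : measurable_fun D (fun t => gf x t).
Proof.
apply: measurable_funTS; apply: measurable_realfun.measurable_funM => //.
exact: measurableT_comp.
Qed.

Lemma mEgf x (D : set R) : measurable_fun D (EFin \o gf x).
Proof. by apply/measurable_EFinP; exact: mgf. Qed.

Lemma Gamma_EG x : Gamma x = fine (EG x).
Proof.
rewrite /Gamma /Rintegral /EG -/(gf x) integral_itv_obnd_cbnd //.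
exact: mEgf.
Qed.

Lemma cont_powR a t : 0 < t -> {for t, continuous (fun u : R => u `^ a)}.
Proof.
move=> t0; apply: differentiable_continuous; apply/derivable1_diffP.
by apply: derivable_powR; rewrite in_itv /= andbT.
Qed.

Lemma cont_expN t : {for t, continuous (fun u : R => expR (- u))}.
Proof.
apply: continuous_comp; last exact: continuous_expR.
exact: (@continuousN _ R^o).
Qed.

Lemma cont_gf x t : 0 < t -> {for t, continuous (gf x)}.
Proof.
move=> t0; apply: continuousM; [exact: cont_powR | exact: cont_expN].
Qed.

Lemma cvg0_powR a : 0 <= a -> (fun t : R => t `^ a) @ 0^'+ --> 0 `^ a.
Proof.
rewrite le_eqVlt => /predU1P[<-|a0].
  under eq_fun do rewrite powRr0. rewrite powRr0; exact: cvg_cst.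
rewrite powR0 ?gt_eqF //; exact: powR_cvg0.
Qed.

Lemma der_F (x t : R) : 0 < t ->
  is_derive t 1 (fun u : R => u `^ x * expR (- u))
    (x * t `^ (x - 1) * expR (- t) - t `^ x * expR (- t)).
Proof.
move=> t0.
have h1 : is_derive t 1 (fun u : R => u `^ x) (x * t `^ (x - 1)) by exact: is_derive1_powR.
have h2 : is_derive t 1 (expR \o (fun u : R => - u)) (expR (- t) * (- 1)).
  exact: is_derive1_comp.
have -> : x * t `^ (x - 1) * expR (- t) - t `^ x * expR (- t) =
  t `^ x *: (expR (- t) * (- 1)) + expR (- t) *: (x * t `^ (x - 1)).
  by rewrite /GRing.scale /=; ring.
exact: is_deriveM h1 h2.
Qed.

Lemma inv_cvg0 : (fun u : R => u^-1) @ +oo --> 0.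
Proof.
have := @gtr0_cvgV0 R _ (nbhs +oo) _ (fun u : R => u).
move=> /(_ _) h; apply/h.
  by near=> u.
exact: cvg_id.
Unshelve. all: by end_near. Qed.

Lemma Fy (x : R) (m : nat) : 0 < x -> x <= m%:R ->
  (fun u : R => u `^ x * expR (- u)) @ +oo --> 0.
Proof.
move=> x0 xm.
set C : R := (m.+1`!)%:R.
have C0 : 0 < C by rewrite ltr0n fact_gt0.
have hC : (fun u : R => C * u^-1) @ +oo --> 0.
  rewrite -(mulr0 C); apply: cvgM; [exact: cvg_cst | exact: inv_cvg0].
apply: (squeeze_cvgr _ (cvg_cst 0) hC).
near=> u.
have u1 : 1 <= u by near: u; exact: nbhs_pinfty_ge.
have u0 : 0 < u by lra.
apply/andP; split; first by rewrite mulr_ge0 ?powR_ge0 ?expR_ge0.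
have h1 : u `^ x <= u ^+ m.
  rewrite -powR_mulrn; [exact: (ler_powR u1 xm) | exact: ltW].
have h2 := expR_ge1Dxn m (ltW u0).
rewrite expRN.
rewrite ler_pdivrMr ?expR_gt0 // mulrAC ler_pdivlMr //.
apply: (le_trans (ler_wpM2r (ltW u0) h1)).
rewrite -exprSr.
have : u ^+ m.+1 / C <= expR u by apply: le_trans h2; rewrite lerDr.
by rewrite ler_pdivrMr // mulrC.
Unshelve. all: by end_near. Qed.

Lemma split_int (f : R -> R) (a : R) : 0 <= a -> (forall u, 0 <= u -> 0 <= f u) ->
  measurable_fun setT f ->
  (\int[mu]_(u in `[0%R, +oo[) (f u)%:E =
   \int[mu]_(u in `[0%R, a]) (f u)%:E + \int[mu]_(u in `[a, +oo[) (f u)%:E)%E.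
Proof.
move=> a0 f0 mf.
rewrite (@itv_bndbnd_setU _ _ (BLeft 0%R) (BRight a) (BInfty _ false)); last 2 first.
  by rewrite bnd_simp.
  by [].
have mE : forall D : set R, measurable_fun D (EFin \o f).
  by move=> D; apply/measurable_EFinP; exact: measurable_funTS.
rewrite ge0_integral_setU //=.
- by rewrite integral_itv_obnd_cbnd.
- exact: mE.
- move=> u; rewrite !in_itv /= => h; rewrite lee_fin f0 //.
  case: h => [/andP[] // | /andP[h _]]; by rewrite (le_trans a0) // ltW.
- rewrite disj_set2E; apply/eqP/seteqP; split => // u /= [].
  by rewrite !in_itv /= andbT => /andP[_ h1] h2; move: (le_lt_trans h1 h2); rewrite ltxx.
Qed.

Lemma EG_rec (x : R) (m : nat) : 1 <= x -> x <= m%:R -> EG (x + 1) = (x%:E * EG x)%E.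
Proof.
move=> x1 xm; have x0 : 0 < x by lra.
set F := fun u : R => u `^ x * expR (- u).
set g := fun u : R => x * gf x u.
have gfE u : gf (x + 1) u = F u by rewrite /gf addrK.
have mF : measurable_fun setT F.
  apply: measurable_realfun.measurable_funM => //; exact: measurableT_comp.
have mg : measurable_fun setT g.
  by apply: measurable_realfun.measurable_funM => //; exact: mgf.
have F_ge0 u : 0 <= F u by rewrite /F mulr_ge0 ?powR_ge0 ?expR_ge0.
have g_ge0 u : 0 <= g u.
  by rewrite /g /gf; apply: mulr_ge0; [exact: ltW | rewrite mulr_ge0 ?powR_ge0 ?expR_ge0].
have gFE (u : R) : 0 <= u -> g u - F u = u `^ (x - 1) * expR (- u) * (x - u).
  by move=> u0; rewrite /g /F /gf -(mulr_powRB1 u0 x0); ring.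
have dF (u : R) : 0 < u -> is_derive u 1 F (g u - F u).
  by move=> u0; have := der_F x u u0; rewrite /g /gf mulrA.
have F0 : F 0 = 0 by rewrite /F powR0 ?mul0r // gt_eqF.
have Fr : F u @[u --> 0^'+] --> F 0.
  apply: cvgM; first exact: cvg0_powR (ltW x0).
  by apply: cvg_at_right_filter; exact: cont_expN.
have Fcont (u : R) : 0 < u -> {for u, continuous F}.
  by move=> u0; apply: continuousM; [exact: cont_powR | exact: cont_expN].
have gcont (u : R) : 0 < u -> {for u, continuous g}.
  by move=> u0; apply: continuousM; [exact: cvg_cst | exact: cont_gf].
have I1 : (\int[mu]_(u in `[0%R, x]) (g u - F u)%:E = (F x)%:E)%E.
  rewrite (@continuous_FTC2 _ _ F) ?F0 ?sube0 //.
  - apply/continuous_within_itvP => //; split.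
    + move=> u; rewrite in_itv /= => /andP[u0 _].
      by apply: continuousB; [exact: gcont | exact: Fcont].
    + apply: cvgB => //; apply: cvgM; first exact: cvg_cst.
      apply: cvgM; first by apply: cvg0_powR; rewrite subr_ge0.
      by apply: cvg_at_right_filter; exact: cont_expN.
    + by apply: cvg_at_left_filter; apply: continuousB; [exact: gcont | exact: Fcont].
  - split.
    + move=> u; rewrite in_itv /= => /andP[u0 _]. by have [] := dF u u0.
    + exact: Fr.
    + exact: cvg_at_left_filter (Fcont x x0).
  - by move=> u; rewrite in_itv /= => /andP[u0 _]; rewrite derive1E; have [_ ->] := dF u u0.
have I2 : (\int[mu]_(u in `[x, +oo[) (F u - g u)%:E = (F x)%:E)%E.
  rewrite (@ge0_continuous_FTC2y _ _ (fun u => - F u) _ 0); first by rewrite EFinN sub0e oppeK.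
  - move=> u xu; rewrite -opprB gFE; last by rewrite (le_trans (ltW x0)).
    by rewrite -mulrN mulr_ge0 ?mulr_ge0 ?powR_ge0 ?expR_ge0 // opprB subr_ge0.
  - apply/continuous_within_itvcyP; split.
    + move=> u; rewrite in_itv /= andbT => xu.
      have u0 : 0 < u by apply: lt_trans xu.
      by apply: continuousB; [exact: Fcont | exact: gcont].
    + by apply: cvg_at_right_filter; apply: continuousB; [exact: Fcont | exact: gcont].
  - rewrite -oppr0; apply: cvgN; exact: Fy x0 xm.
  - move=> u xu; have u0 : 0 < u by apply: lt_trans xu.
    by have [] := is_deriveN (dF u u0).
  - by apply: cvgN; apply: cvg_at_right_filter; exact: Fcont.
  - move=> u; rewrite in_itv /= andbT => xu; have u0 : 0 < u by apply: lt_trans xu.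
    by rewrite derive1E; have [_ ->] := is_deriveN (dF u u0); rewrite opprB.
have mE : forall (h : R -> R) (D : set R), measurable_fun setT h -> measurable_fun D (EFin \o h).
  by move=> h D mh; apply/measurable_EFinP; exact: measurable_funTS.
have e1 : (\int[mu]_(u in `[x, +oo[) (F u)%:E =
           (F x)%:E + \int[mu]_(u in `[x, +oo[) (g u)%:E)%E.
  rewrite -I2 -ge0_integralD //=.
  - by apply: eq_integral => u _; rewrite -EFinD subrK.
  - move=> u; rewrite in_itv /= andbT => xu.
    rewrite lee_fin -opprB gFE; last by rewrite (le_trans (ltW x0)).
    by rewrite -mulrN mulr_ge0 ?mulr_ge0 ?powR_ge0 ?expR_ge0 // opprB subr_ge0.
  - by apply: mE; apply: measurable_funB.
  - by move=> u _; rewrite lee_fin.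
  - exact: mE.
have e2 : (\int[mu]_(u in `[0%R, x]) (g u)%:E =
           (F x)%:E + \int[mu]_(u in `[0%R, x]) (F u)%:E)%E.
  rewrite -I1 -ge0_integralD //=.
  - by apply: eq_integral => u _; rewrite -EFinD subrK.
  - move=> u; rewrite in_itv /= => /andP[u0 ux].
    by rewrite lee_fin gFE // mulr_ge0 ?mulr_ge0 ?powR_ge0 ?expR_ge0 // subr_ge0.
  - by apply: mE; apply: measurable_funB.
  - by move=> u _; rewrite lee_fin.
  - exact: mE.
rewrite /EG.
under eq_integral do rewrite gfE.
rewrite -ge0_integralZl_EFin //=; try exact: mEgf; try exact: ltW;
  try (by move=> u _; rewrite lee_fin /gf mulr_ge0 ?powR_ge0 ?expR_ge0).
under [X in _ = X]eq_integral => u _ do rewrite -EFinM -/(g u).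
rewrite (split_int F x) //; last exact: ltW.
rewrite (split_int g x) //; last exact: ltW.
rewrite e1 e2.
by rewrite addeA [X in (X + _)%E]addeC.
Qed.

Lemma EG1 : EG 1 = 1%:E.
Proof.
have dE (u : R) : is_derive u 1 (fun v : R => - expR (- v)) (expR (- u)).
  have h : is_derive u 1 (expR \o (fun v : R => - v)) (expR (- u) * (-1)).
    exact: is_derive1_comp.
  by have := is_deriveN h; rewrite mulrN1 opprK.
rewrite /EG; under eq_integral => u _ do rewrite /gf subrr powRr0 mul1r.
rewrite (@ge0_continuous_FTC2y _ _ (fun u => - expR (- u)) 0 0).
- by rewrite oppr0 expR0 EFinN sub0e oppeK.
- by move=> u _; exact: expR_ge0.
- by apply: continuous_subspaceT => u; exact: cont_expN.
- by rewrite -oppr0; apply: cvgN; exact: cvgr_expR.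
- by move=> u _; have [] := dE u.
- by apply: cvgN; apply: cvg_at_right_filter; exact: cont_expN.
- by move=> u _; rewrite derive1E; have [_ ->] := dE u.
Qed.

Lemma EG_nat k : EG k.+1%:R = (k`!)%:R%:E.
Proof.
elim: k => [|k IH]; first by rewrite EG1.
rewrite -natr1 (@EG_rec _ k.+1) ?ler1n ?lexx // IH factS natrM EFinM.
reflexivity.
Qed.

Lemma pow_le (a u : R) : 0 <= a <= 1 -> 0 <= u -> u `^ a <= 1 + u.
Proof.
move=> /andP[a0 a1] u0.
case: (leP u 1) => u1.
  have [->|u0'] := eqVneq u 0.
    by rewrite /powR eqxx addr0; case: (a == 0).
  have u0'' : 0 < u by rewrite lt_neqAle eq_sym u0' u0.
  have uu : 0 < u <= 1 by rewrite u0'' u1.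
  have := @ger_powR _ u uu 0 a a0; rewrite powRr0 => h.
  by apply: le_trans h _; rewrite lerDl.
have := ler1_powR (ltW u1) a1 => h.
by apply: le_trans h _; rewrite lerDr.
Qed.

Lemma pow_ge (a u : R) : 0 <= a <= 1 -> 0 <= u -> u <= u `^ a + u `^ (a + 1).
Proof.
move=> /andP[a0 a1] u0.
case: (leP u 1) => u1.
  have [->|u0'] := eqVneq u 0.
    by rewrite addr_ge0 ?powR_ge0.
  have u0'' : 0 < u by rewrite lt_neqAle eq_sym u0' u0.
  have uu : 0 < u <= 1 by rewrite u0'' u1.
  have h := ger1_powR uu a1.
  by apply: le_trans h _; rewrite lerDl powR_ge0.
have h := le1r_powR (ltW u1) (_ : 1 <= a + 1).
by apply: le_trans (h _) _; [rewrite lerDr | rewrite lerDr powR_ge0].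
Qed.

Lemma EG_ge0 x : (0 <= EG x)%E.
Proof.
apply: integral_ge0 => u _; by rewrite lee_fin /gf mulr_ge0 ?powR_ge0 ?expR_ge0.
Qed.

Lemma EG_base (p : R) : 0 < p -> p < 1 -> exists r, 0 < r /\ EG (1 - p + 1) = r%:E.
Proof.
move=> p0 p1.
set x := 1 - p + 1.
have x1 : 1 <= x by rewrite /x; lra.
have x2 : x <= 2%:R by rewrite /x; lra.
have hx1 : x - 1 = 1 - p by rewrite /x; ring.
have hx2 : x + 1 - 1 = (1 - p) + 1 by rewrite /x; ring.
have a01 : 0 <= 1 - p <= 1 by apply/andP; split; lra.
have E2 : EG 2%:R = 1%:E by rewrite (EG_nat 1).
have mE : forall (h : R -> R) (D : set R), measurable_fun setT h -> measurable_fun D (EFin \o h).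
  by move=> h D mh; apply/measurable_EFinP; exact: measurable_funTS.
have Eub : (EG x <= 2%:E)%E.
  have -> : (2%:E = EG 1 + EG 2%:R)%E by rewrite EG1 E2 -EFinD.
  rewrite /EG -ge0_integralD //; last 4 first.
  - by move=> u _; rewrite lee_fin /gf mulr_ge0 ?powR_ge0 ?expR_ge0.
  - exact: mEgf.
  - by move=> u _; rewrite lee_fin /gf mulr_ge0 ?powR_ge0 ?expR_ge0.
  - exact: mEgf.
  apply: ge0_le_integral => //.
  - by move=> u _; rewrite lee_fin /gf mulr_ge0 ?powR_ge0 ?expR_ge0.
  - exact: mEgf.
  - by apply/measurable_EFinP; apply: measurable_funD; exact: mgf.
  move=> u; rewrite /= in_itv /= andbT => u0; rewrite lee_fin /gf hx1 subrr powRr0.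
  rewrite (_ : 2%:R - 1 = 1); last by rewrite -natr1 addrK.
  rewrite powRr1 // -mulrDl ler_wpM2r ?expR_ge0 //.
  exact: pow_le.
have Elb : (EG 2%:R <= EG x + EG (x + 1))%E.
  rewrite /EG -ge0_integralD //; last 4 first.
  - by move=> u _; rewrite lee_fin /gf mulr_ge0 ?powR_ge0 ?expR_ge0.
  - exact: mEgf.
  - by move=> u _; rewrite lee_fin /gf mulr_ge0 ?powR_ge0 ?expR_ge0.
  - exact: mEgf.
  apply: ge0_le_integral => //.
  - by move=> u _; rewrite lee_fin /gf mulr_ge0 ?powR_ge0 ?expR_ge0.
  - exact: mEgf.
  - by apply/measurable_EFinP; apply: measurable_funD; exact: mgf.
  move=> u; rewrite /= in_itv /= andbT => u0; rewrite lee_fin /gf hx1 hx2.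
  rewrite (_ : 2%:R - 1 = 1); last by rewrite -natr1 addrK.
  rewrite powRr1 // -mulrDl ler_wpM2r ?expR_ge0 //.
  exact: pow_ge.
have fx : EG x \is a fin_num.
  by rewrite ge0_fin_numE ?EG_ge0 // (le_lt_trans Eub) // ltry.
exists (fine (EG x)); split; last by rewrite fineK.
move: Elb; rewrite E2 (@EG_rec x 2) // -(fineK fx) -EFinM -EFinD lee_fin => h.
have r0 : 0 <= fine (EG x) by rewrite fine_ge0 ?EG_ge0.
have : 0 < (1 + x) * fine (EG x) by rewrite mulrDl mul1r; lra.
by rewrite pmulr_rgt0 //; lra.
Qed.

Lemma EG_pk (p : R) : 0 < p -> p < 1 -> forall k : nat,
  exists r, 0 < r /\ EG (k.+1%:R - p + 1) = r%:E.
Proof.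
move=> p0 p1; elim=> [|k [r [r0 hr]]]; first by rewrite mulr1n; exact: EG_base.
have hk : 1 <= k.+1%:R :> R by rewrite ler1n.
rewrite -[k.+2%:R]natr1 (_ : k.+1%:R + 1 - p + 1 = (k.+1%:R - p + 1) + 1); last by ring.
rewrite (@EG_rec _ k.+2) ?hr; last 2 first.
  by lra.
  by rewrite -[k.+2%:R]natr1; lra.
exists ((k.+1%:R - p + 1) * r); split => //.
by apply: mulr_gt0 => //; lra.
Qed.

End Gam.

Lemma Gamma_nat (R : realType) k : Gamma (k.+1%:R : R) = (k`!)%:R.
Proof. by rewrite Gamma_EG EG_nat. Qed.

Lemma G1S (R : realType) k : (0 < k)%N -> Gamma (k.+1%:R : R) = k%:R * Gamma k%:R.
Proof. by case: k => // k _; rewrite !Gamma_nat factS natrM. Qed.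

Lemma G1n0 (R : realType) k : (0 < k)%N -> Gamma (k%:R : R) != 0.
Proof. by case: k => // k _; rewrite Gamma_nat pnatr_eq0 -lt0n fact_gt0. Qed.

Lemma G2n0 (R : realType) (p : R) : 0 < p -> p < 1 -> forall k, (0 < k)%N ->
  Gamma (k%:R - p + 1) != 0.
Proof.
move=> p0 p1 [//|k] _; have [r [r0 hr]] := @EG_pk _ p p0 p1 k.
by rewrite Gamma_EG hr /= gt_eqF.
Qed.

Lemma G2S (R : realType) (p : R) : 0 < p -> p < 1 -> forall k, (0 < k)%N ->
  Gamma (k.+1%:R - p + 1) = (k.+1%:R - p) * Gamma (k%:R - p + 1).
Proof.
move=> p0 p1 [//|k] _; have [r [r0 hr]] := @EG_pk _ p p0 p1 k.
have hk : 1 <= k.+1%:R :> R by rewrite ler1n.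
rewrite !Gamma_EG -[k.+2%:R]natr1 (_ : k.+1%:R + 1 - p + 1 = (k.+1%:R - p + 1) + 1); last by ring.
rewrite (@EG_rec _ _ k.+2) ?hr /=; last 2 first.
  by lra.
  by rewrite -[k.+2%:R]natr1; lra.
by congr (_ * _); ring.
Qed.

End GammaPart.
End SimonAux.


Theorem lemma4p2 (R : realType) (p : R) (hp0 : 0 < p) (hp1 : p < 1)
  (n c : nat) (hc : (1 <= c)%N) (hcn : (c <= n)%N) :
  EK p n c =
  Gamma (n%:R - p + 1) / Gamma n%:R *
  (p ^+ c.-1 / (1 - p) ^+ c *
     \sum_(c.+1 <= i < n.+1)
        (if c == 1%N then 0 else ('C(i - 2, c - 2))%:R) *
        ((1 - p) ^+ i * Gamma i%:R / Gamma (i%:R - p + 1))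
   + p ^+ c.-1 * Gamma c%:R / Gamma (c%:R - p + 1)).
Proof.
have h := (@SimonAux.main_alg R p hp0 hp1 n c (fun k => Gamma k%:R)
  (fun k => Gamma (k%:R - p + 1)) (@SimonAux.GammaPart.G1S R)
  (@SimonAux.GammaPart.G2S R p hp0 hp1) (@SimonAux.GammaPart.G1n0 R)
  (@SimonAux.GammaPart.G2n0 R p hp0 hp1) hc hcn).
exact: h.
Qed.
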